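(* Let $\rho\geqslant1$ and let $S\in\mathbb{R}^{m\times n}$ be such that the event $\mathcal{E}^m_\rho$ holds, i.e. $\|C_S-I_d\|_2\leqslant\rho$. Then for every $x\in\mathbb{R}^d$, $\delta_x\leqslant(1+\rho)\,\widetilde\delta_x$. Consequently, if $S$ is drawn from a random embedding with critical sketch size $m_\delta$ (for a given $\delta\in(0,1)$) and $m\leqslant m_\delta$, then with probability at least $1-\delta$ we have $\delta_x\leqslant\widetilde\delta_x\,(1+m_\delta/m)$ for all $x\in\mathbb{R}^d$.
   Context: Let $A\in\mathbb{R}^{n\times d}$ with $n\geqslant d$, $b\in\mathbb{R}^d$, $\Lambda\in\mathbb{R}^{d\times d}$ diagonal with $\Lambda\succeq I_d$, and $\nu>0$. Set $H=A^\top A+\nu^2\Lambda$, $f(x)=\frac12 x^\top Hx-b^\top x$ and $x^*=H^{-1}b$. For $S\in\mathbb{R}^{m\times n}$ set $H_S=A^\top S^\top SA+\nu^2\Lambda$ and $C_S=H^{-1/2}H_SH^{-1/2}$. For $x\in\mathbb{R}^d$ let $\delta_x=\frac12\|x-x^*\|_H^2$ (with $\|z\|_H^2=z^\top Hz$) and $\widetilde\delta_x=\frac12\nabla f(x)^\top H_S^{-1}\nabla f(x)$. For $\rho>0$, $\mathcal{E}^m_\rho$ denotes the event $\|C_S-I_d\|_2\leqslant\max\{\sqrt\rho,\rho\}$. A random embedding is a family of distributions of random matrices $S\in\mathbb{R}^{m\times n}$, one for each $m\geqslant1$; given $\delta\in(0,1)$ its critical sketch size is $m_\delta=\inf\{k\geqslant1:\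 \mathbb{P}(\mathcal{E}^m_\rho)\geqslant1-\delta \text{ for all } \rho>0 \text{ and all } m\geqslant k/\rho\}$. *)

(* Defs.v *)
From HB Require Import structures.
From mathcomp Require Import all_boot all_order all_algebra.
From mathcomp Require Import all_classical all_reals all_analysis.
Set Implicit Arguments. Unset Strict Implicit. Unset Printing Implicit Defensive.
Import Order.TTheory GRing.Theory Num.Theory.
Local Open Scope classical_set_scope.
Local Open Scope ring_scope.

Section Defs.
Variable R : realType.

Definition qform (k : nat) (u : 'cV[R]_k) (M : 'M[R]_k) (v : 'cV[R]_k) : R :=
  (u^T *m M *m v) ord0 ord0.

Definition vnorm2 (k : nat) (v : 'cV[R]_k) : R :=
  Num.sqrt (\sum_i (v i ord0) ^+ 2).

Definition spec_norm (k : nat) (M : 'M[R]_k) : R :=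
  sup [set vnorm2 (M *m v) | v in [set v : 'cV[R]_k | vnorm2 v = 1]].

Definition loewner_le (k : nat) (M N : 'M[R]_k) : Prop :=
  forall v : 'cV[R]_k, qform v M v <= qform v N v.

Definition sym_psd (k : nat) (M : 'M[R]_k) : Prop :=
  M^T = M /\ forall v : 'cV[R]_k, 0 <= qform v M v.

Variables (n d : nat) (A : 'M[R]_(n, d)) (b : 'cV[R]_d)
          (Lam : 'M[R]_d) (nu : R).

Definition Hmat : 'M[R]_d := A^T *m A + nu ^+ 2 *: Lam.

Definition HS (m : nat) (S : 'M[R]_(m, n)) : 'M[R]_d :=
  A^T *m S^T *m S *m A + nu ^+ 2 *: Lam.

Definition fobj (x : 'cV[R]_d) : R := 2^-1 * qform x Hmat x - (b^T *m x) ord0 ord0.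
Definition gradf (x : 'cV[R]_d) : 'cV[R]_d := Hmat *m x - b.

Definition xstar : 'cV[R]_d := invmx Hmat *m b.

Definition delta_x (x : 'cV[R]_d) : R :=
  2^-1 * qform (x - xstar) Hmat (x - xstar).

Definition delta_tilde (m : nat) (S : 'M[R]_(m, n)) (x : 'cV[R]_d) : R :=
  2^-1 * qform (gradf x) (invmx (HS S)) (gradf x).

(* C_S = H^{-1/2} H_S H^{-1/2}, where Hmh is the matrix H^{-1/2} *)
Definition CS (Hmh : 'M[R]_d) (m : nat) (S : 'M[R]_(m, n)) : 'M[R]_d :=
  Hmh *m HS S *m Hmh.

Definition Event (Hmh : 'M[R]_d) (rho : R) (m : nat) (S : 'M[R]_(m, n)) : Prop :=
  spec_norm (CS Hmh S - 1%:M) <= Num.max (Num.sqrt rho) rho.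

(* k belongs to the set whose infimum defines the critical sketch size *)
Definition crit_ok (Hmh : 'M[R]_d) (dT : measure_display) (T : measurableType dT)
  (P : probability T R) (Smat : forall m : nat, T -> 'M[R]_(m, n)) (delta : R)
  (k : nat) : Prop :=
  (1 <= k)%N /\
  forall (rho : R), 0 < rho -> forall m : nat, k%:R / rho <= m%:R ->
    ((1 - delta)%:E <= P [set t | Event Hmh rho (Smat m t)]%classic)%E.

(* m_delta is the critical sketch size: the infimum (= least element) of that set *)
Definition critical_sketch_size (Hmh : 'M[R]_d) (dT : measure_display)
  (T : measurableType dT) (P : probability T R)
  (Smat : forall m : nat, T -> 'M[R]_(m, n)) (delta : R) (md : nat) : Prop :=
  crit_ok Hmh P Smat delta md /\
  forall k, crit_ok Hmh P Smat delta k -> (md <= k)%N.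

End Defs.

(* Main.v *)
Require Import Defs.
From HB Require Import structures.
From mathcomp Require Import all_boot all_order all_algebra.
From mathcomp Require Import all_classical all_reals all_analysis.
From mathcomp Require Import lra ring.
Import Order.TTheory GRing.Theory Num.Theory.
Local Open Scope ring_scope.
Local Open Scope classical_set_scope.

Set Implicit Arguments. Unset Strict Implicit.
Section Helpers.
Variable R : realType.
Implicit Types k : nat.

Lemma qformC k (a b : 'cV[R]_k) (M : 'M[R]_k) : M^T = M ->
  qform a M b = qform b M a.
Proof.
move=> hM; rewrite /qform -[in LHS](trmxK (a^T *m M *m b)) mxE.
by rewrite !trmx_mul trmxK hM mulmxA.
Qed.

Lemma qform_mul k (a b : 'cV[R]_k) (M X : 'M[R]_k) :
  qform a (X^T *m M *m X) b = qform (X *m a) M (X *m b).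
Proof. by rewrite /qform trmx_mul !mulmxA. Qed.

Lemma qform_expand k (a b : 'cV[R]_k) (M : 'M[R]_k) (t : R) : M^T = M ->
  qform (a + t *: b) M (a + t *: b) =
  qform a M a + 2 * t * qform a M b + t ^+ 2 * qform b M b.
Proof.
move=> hM.
have hba := qformC b a hM.
move: hba; rewrite /qform => hba.
rewrite [(a + t *: b)^T]linearD /= linearZ /=.
rewrite !mulmxDl !mulmxDr.
rewrite -!scalemxAl -!scalemxAr !mxE.
rewrite !mxE in hba; rewrite hba.
set x1 := \sum_j _; set x2 := \sum_j _; set x3 := \sum_j _; lra.
Qed.

Lemma quad_disc (al be ga : R) : 0 <= ga ->
  (forall t, 0 <= al + 2 * t * be + t ^+ 2 * ga) -> be ^+ 2 <= al * ga.
Proof.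
move=> hg h.
have [g0|gp] := eqVneq ga 0.
  subst ga. 
  have [b0|bn] := eqVneq be 0; first by subst be; rewrite expr0n /= mulr0.
  have := h (- (al + 1) / (2 * be)).
  have -> : 2 * (- (al + 1) / (2 * be)) * be = - (al + 1) by field.
  rewrite mulr0 addr0; lra.
have gpos : 0 < ga by rewrite lt_def gp hg.
have := h (- be / ga).
move=> H.
have : 0 <= ga * (al + 2 * (- be / ga) * be + (- be / ga) ^+ 2 * ga) by apply: mulr_ge0 => //; lra.
have -> : ga * (al + 2 * (- be / ga) * be + (- be / ga) ^+ 2 * ga) = al * ga - be ^+ 2.
  by field.
lra.
Qed.

Lemma cauchy_schwarz k (a b : 'cV[R]_k) (M : 'M[R]_k) : M^T = M ->
  (forall v, 0 <= qform v M v) ->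
  qform a M b ^+ 2 <= qform a M a * qform b M b.
Proof.
move=> hM hpos; apply: quad_disc; first exact: hpos.
by move=> t; rewrite -qform_expand.
Qed.


Lemma qform1E k (x y : 'cV[R]_k) : qform x 1%:M y = \sum_j x j ord0 * y j ord0.
Proof. by rewrite /qform mulmx1 mxE; apply: eq_bigr => j _; rewrite mxE. Qed.

Lemma qform1_ge0 k (x : 'cV[R]_k) : 0 <= qform x 1%:M x.
Proof. by rewrite qform1E; apply: sumr_ge0 => j _; rewrite -expr2 sqr_ge0. Qed.

Lemma vnorm2E k (x : 'cV[R]_k) : vnorm2 x = Num.sqrt (qform x 1%:M x).
Proof. by rewrite /vnorm2 qform1E; congr Num.sqrt; apply: eq_bigr => j _; rewrite expr2. Qed.

Lemma vnorm2_ge0 k (x : 'cV[R]_k) : 0 <= vnorm2 x.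
Proof. by rewrite vnorm2E sqrtr_ge0. Qed.

Lemma vnorm2_sq k (x : 'cV[R]_k) : vnorm2 x ^+ 2 = qform x 1%:M x.
Proof. by rewrite vnorm2E sqr_sqrtr // qform1_ge0. Qed.

Lemma qform1_sym k : (1%:M : 'M[R]_k)^T = 1%:M.
Proof. exact: trmx1. Qed.

Lemma dot_le k (a b : 'cV[R]_k) : qform a 1%:M b <= vnorm2 a * vnorm2 b.
Proof.
rewrite !vnorm2E -sqrtrM ?qform1_ge0 //.
apply: le_trans (ler_norm _) _.
rewrite -sqrtr_sqr; apply: ler_wsqrtr.
apply: cauchy_schwarz; first exact: trmx1.
exact: qform1_ge0.
Qed.

Lemma vnorm2Z k (c : R) (x : 'cV[R]_k) : vnorm2 (c *: x) = `|c| * vnorm2 x.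
Proof.
rewrite !vnorm2E /qform linearZ /= [(c *: x)^T]linearZ /= -!scalemxAl scalerA mxE.
by rewrite -expr2 sqrtrM ?sqr_ge0 // sqrtr_sqr.
Qed.

Lemma vnorm2_eq0 k (x : 'cV[R]_k) : vnorm2 x = 0 -> x = 0.
Proof.
rewrite /vnorm2 => /eqP; rewrite sqrtr_eq0 => hle.
have h0 : \sum_i (x i ord0) ^+ 2 = 0.
  by apply/eqP; rewrite eq_le hle; apply: sumr_ge0 => i _; apply: sqr_ge0.
apply/matrixP => i j; rewrite (ord1 j) mxE.
have := psumr_eq0P (P := xpredT) (fun i _ => sqr_ge0 (x i ord0)) h0 (i := i) isT.
by move/eqP; rewrite sqrf_eq0 => /eqP.
Qed.

Lemma mulmx_entry k (M : 'M[R]_k) (v : 'cV[R]_k) i :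
  (M *m v) i ord0 = qform (row i M)^T 1%:M v.
Proof. by rewrite /qform trmxK mulmx1 -row_mul [RHS]mxE. Qed.

Lemma spec_has_sup k (M : 'M[R]_k) (v0 : 'cV[R]_k) : vnorm2 v0 = 1 ->
  has_sup [set vnorm2 (M *m v) | v in [set v : 'cV[R]_k | vnorm2 v = 1]].
Proof.
move=> hv0; split; first by exists (vnorm2 (M *m v0)); exists v0.
exists (Num.sqrt (\sum_i qform (row i M)^T 1%:M (row i M)^T)).
move=> _ [v hv <-].
rewrite /vnorm2; apply: ler_wsqrtr; apply: ler_sum => i _.
rewrite mulmx_entry.
apply: le_trans (cauchy_schwarz _ _ (trmx1 _ _) (@qform1_ge0 _)) _.
by rewrite -(vnorm2_sq v) hv expr1n mulr1.
Qed.

Lemma spec_bound k (M : 'M[R]_k) (v : 'cV[R]_k) :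
  vnorm2 (M *m v) <= spec_norm M * vnorm2 v.
Proof.
have [h0|hn] := eqVneq (vnorm2 v) 0.
  rewrite h0 mulr0 (vnorm2_eq0 h0) mulmx0.
  by rewrite -(scale0r (0 : 'cV[R]_k)) vnorm2Z normr0 mul0r.
have cpos : 0 < vnorm2 v by rewrite lt_def hn vnorm2_ge0.
set v' := (vnorm2 v)^-1 *: v.
have hv' : vnorm2 v' = 1 by rewrite vnorm2Z ger0_norm ?invr_ge0 ?vnorm2_ge0 // mulVf.
have hle : vnorm2 (M *m v') <= spec_norm M.
  by apply: (sup_upper_bound (spec_has_sup M hv')); exists v'.
have e : vnorm2 (M *m v') = (vnorm2 v)^-1 * vnorm2 (M *m v).
  by rewrite /v' -scalemxAr vnorm2Z ger0_norm // invr_ge0 vnorm2_ge0.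
move: hle; rewrite e ler_pdivrMl //.
by rewrite mulrC.
Qed.


Lemma main_ineq k (C : 'M[R]_k) (lam : R) (u w : 'cV[R]_k) : C^T = C ->
  (forall v, 0 <= qform v C v) -> (forall v, qform v C v <= lam * qform v 1%:M v) ->
  0 < lam -> u = C *m w -> qform u 1%:M u <= lam * qform w C w.
Proof.
move=> hC hpos hle hlam hu.
have e1 : qform u 1%:M u = qform w C u.
  by rewrite /qform mulmx1 {1}hu trmx_mul hC.
have cs := cauchy_schwarz w u hC hpos.
rewrite -e1 in cs.
have h2 := hle u.
have hq := qform1_ge0 u.
have ha := hpos w.
set q := qform u 1%:M u in e1 cs h2 hq *.
set a := qform w C w in cs ha *.
set c := qform u C u in cs h2.
have : q ^+ 2 <= a * (lam * q).
  by apply: le_trans cs _; apply: ler_wpM2l.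
move=> h.
have [q0|qn] := eqVneq q 0; first by rewrite q0; apply: mulr_ge0 => //; apply: ltW.
have qp : 0 < q by rewrite lt_def qn hq.
rewrite -(ler_pM2r qp) -expr2; apply: le_trans h _.
by rewrite mulrA (mulrC a).
Qed.

Lemma qform_split k (C : 'M[R]_k) (v : 'cV[R]_k) :
  qform v C v = qform v 1%:M v + qform v 1%:M ((C - 1%:M) *m v).
Proof.
rewrite /qform !mulmx1 -{1}(subrK 1%:M C) mulmxDr mulmxDl mxE mulmx1 mulmxA.
by rewrite addrC.
Qed.

Lemma event_le k (C : 'M[R]_k) (rho : R) : 1 <= rho ->
  spec_norm (C - 1%:M) <= Num.max (Num.sqrt rho) rho ->
  forall v, qform v C v <= (1 + rho) * qform v 1%:M v.
Proof.
move=> hr hs v.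
have hsq : Num.sqrt rho <= rho.
  have r0 : 0 <= rho by lra.
  rewrite -{2}(sqr_sqrtr r0) expr2 ler_peMl ?sqrtr_ge0 //.
  by rewrite -sqrtr1 ler_wsqrtr.
have hmax : Num.max (Num.sqrt rho) rho = rho by rewrite max_r.
rewrite hmax in hs.
rewrite qform_split.
have h1 := dot_le v ((C - 1%:M) *m v).
have h2 := spec_bound (C - 1%:M) v.
have h3 := vnorm2_ge0 v.
have h4 := vnorm2_sq v.
have h5 : vnorm2 v * vnorm2 ((C - 1%:M) *m v) <= rho * qform v 1%:M v.
  have h6 : vnorm2 ((C - 1%:M) *m v) <= rho * vnorm2 v.
    apply: le_trans h2 _; apply: ler_wpM2r => //.
  rewrite -h4 expr2.
  have -> : rho * (vnorm2 v * vnorm2 v) = vnorm2 v * (rho * vnorm2 v) by ring.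
  exact: ler_wpM2l.
lra.
Qed.

Lemma pd_unit k (M : 'M[R]_k) :
  (forall v : 'cV[R]_k, v != 0 -> 0 < qform v M v) -> M \in unitmx.
Proof.
move=> hpd; rewrite -row_free_unit -kermx_eq0.
apply/negPn/negP => hK.
have [i hi] : exists i, row i (kermx M) != 0.
  case: (pselect (exists i, row i (kermx M) != 0)) => // hn.
  exfalso; move/negP: hK; apply; apply/eqP/row_matrixP => i.
  rewrite row0; apply/eqP; apply/negPn/negP => hne; apply: hn; by exists i.
have hu : row i (kermx M) *m M = 0 by apply/sub_kermxP; exact: row_sub.
have := hpd (row i (kermx M))^T; rewrite trmx_eq0 => /(_ hi).
by rewrite /qform trmxK hu mul0mx mxE ltxx.
Qed.

Lemma qform_gram p k (X : 'M[R]_(p, k)) (v : 'cV[R]_k) :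
  qform v (X^T *m X) v = qform (X *m v) 1%:M (X *m v).
Proof. by rewrite /qform mulmx1 trmx_mul !mulmxA. Qed.

Lemma qformD k (M N : 'M[R]_k) (v : 'cV[R]_k) :
  qform v (M + N) v = qform v M v + qform v N v.
Proof. by rewrite /qform mulmxDr mulmxDl mxE. Qed.

Lemma qformZ k (c : R) (M : 'M[R]_k) (v : 'cV[R]_k) :
  qform v (c *: M) v = c * qform v M v.
Proof. by rewrite /qform -scalemxAr -scalemxAl mxE. Qed.

Lemma qform_inv k (M : 'M[R]_k) (y : 'cV[R]_k) : M^T = M -> M \in unitmx ->
  qform (M *m y) (invmx M) (M *m y) = qform y M y.
Proof.
by move=> hM hu; rewrite /qform trmx_mul hM -!mulmxA mulKVmx.
Qed.

End Helpers.

Theorem lemma2p2 (R : realType) (n d : nat) (A : 'M[R]_(n, d)) (b : 'cV[R]_d)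
  (Lam : 'M[R]_d) (nu : R)
  (hnd : (d <= n)%N) (hLdiag : is_diag_mx Lam) (hLI : loewner_le 1%:M Lam)
  (hnu : 0 < nu)
  (Hmh : 'M[R]_d) (hHmh_psd : sym_psd Hmh)
  (hHmh_sq : Hmh *m Hmh = invmx (Hmat A Lam nu)) :
  (forall (rho : R) (m : nat) (S : 'M[R]_(m, n)),
      1 <= rho -> Event A Lam nu Hmh rho S ->
      forall x : 'cV[R]_d,
        delta_x A b Lam nu x <= (1 + rho) * delta_tilde A b Lam nu S x)
  /\
  (forall (dT : measure_display) (T : measurableType dT) (P : probability T R)
      (Smat : forall m : nat, T -> 'M[R]_(m, n)) (delta : R) (md m : nat),
      (forall (rho : R) (k : nat),
          measurable [set t | Event A Lam nu Hmh rho (Smat k t)]) ->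
      0 < delta < 1 ->
      critical_sketch_size A Lam nu Hmh P Smat delta md ->
      (1 <= m)%N -> (m <= md)%N ->
      exists F : set T, [/\ measurable F, ((1 - delta)%:E <= P F)%E &
        forall t, F t -> forall x : 'cV[R]_d,
          delta_x A b Lam nu x
            <= delta_tilde A b Lam nu (Smat m t) x * (1 + md%:R / m%:R)]).
Proof.
set H := Hmat A Lam nu.
have hLt : Lam^T = Lam.
  apply/matrixP => i j; rewrite mxE.
  have [->//|hij] := eqVneq i j.
  by rewrite !(is_diag_mxP hLdiag) // eq_sym.
have hHt : H^T = H.
  by rewrite /H /Hmat linearD /= linearZ /= trmx_mul trmxK hLt.
have hHSt : forall m (S : 'M[R]_(m, n)), (HS A Lam nu S)^T = HS A Lam nu S.
  move=> m S; rewrite /HS linearD /= linearZ /= hLt !trmx_mul !trmxK.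
  by rewrite !mulmxA.
have hlow : forall v : 'cV[R]_d, v != 0 -> 0 < nu ^+ 2 * qform v 1%:M v.
  move=> v hv; apply: mulr_gt0; first by rewrite exprn_gt0.
  rewrite -vnorm2_sq exprn_gt0 // lt_def vnorm2_ge0 andbT.
  by apply/eqP => /vnorm2_eq0 h0; rewrite h0 eqxx in hv.
have hHpd : forall v : 'cV[R]_d, v != 0 -> 0 < qform v H v.
  move=> v hv; rewrite /H /Hmat qformD qformZ qform_gram.
  have := hlow v hv; have := hLI v; have := qform1_ge0 (A *m v).
  move=> h1 h2 h3.
  have : nu ^+ 2 * qform v 1%:M v <= nu ^+ 2 * qform v Lam v.
    by apply: ler_wpM2l => //; rewrite sqr_ge0.
  lra.
have hHSpsd : forall m (S : 'M[R]_(m, n)) (v : 'cV[R]_d),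
    nu ^+ 2 * qform v 1%:M v <= qform v (HS A Lam nu S) v.
  move=> m S v; rewrite /HS qformD qformZ.
  have -> : A^T *m S^T *m S *m A = (S *m A)^T *m (S *m A) by rewrite trmx_mul !mulmxA.
  rewrite qform_gram.
  have := hLI v; have := qform1_ge0 (S *m A *m v).
  move=> h1 h2.
  have : nu ^+ 2 * qform v 1%:M v <= nu ^+ 2 * qform v Lam v.
    by apply: ler_wpM2l => //; rewrite sqr_ge0.
  lra.
have hHu : H \in unitmx by apply: pd_unit.
have hHSu : forall m (S : 'M[R]_(m, n)), HS A Lam nu S \in unitmx.
  move=> m S; apply: pd_unit => v hv.
  exact: lt_le_trans (hlow v hv) (hHSpsd m S v).
have hHmhu : Hmh \in unitmx.
  have : Hmh *m Hmh \in unitmx by rewrite hHmh_sq unitmx_inv.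
  by rewrite unitmx_mul => /andP[].
have hHmht : Hmh^T = Hmh by case: hHmh_psd.
have part1 : forall (rho : R) (m : nat) (S : 'M[R]_(m, n)),
      1 <= rho -> Event A Lam nu Hmh rho S ->
      forall x : 'cV[R]_d,
        delta_x A b Lam nu x <= (1 + rho) * delta_tilde A b Lam nu S x.
  move=> rho m S hrho hev x.
  set HSS := HS A Lam nu S.
  have hHSSu : HSS \in unitmx by exact: hHSu.
  have hHSSt : HSS^T = HSS by exact: hHSt.
  set C := CS A Lam nu Hmh S.
  set e := x - xstar A b Lam nu.
  have hg : gradf A b Lam nu x = H *m e.
    by rewrite /e /xstar mulmxBr mulKVmx.
  set y := invmx HSS *m gradf A b Lam nu x.
  have hgy : gradf A b Lam nu x = HSS *m y by rewrite /y mulKVmx.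
  set w := invmx Hmh *m y.
  have hCt : C^T = C by rewrite /C /CS !trmx_mul hHmht hHSSt !mulmxA.
  have hCq : forall v, qform v C v = qform (Hmh *m v) HSS (Hmh *m v).
    by move=> v; rewrite -qform_mul hHmht.
  have hCpos : forall v, 0 <= qform v C v.
    move=> v; rewrite hCq; apply: le_trans (hHSpsd m S _).
    by apply: mulr_ge0; [rewrite sqr_ge0 | apply: qform1_ge0].
  have hCle := event_le hrho hev.
  have hw : qform w C w = qform y HSS y by rewrite hCq /w mulKVmx.
  set u := C *m w.
  have hu : u = Hmh *m (H *m e).
    by rewrite /u /C /CS /w -!mulmxA mulKVmx // -hg hgy.
  have hue : qform u 1%:M u = qform e H e.
    rewrite hu mulmxA -qform_mul.
    congr qform.
    rewrite mulmx1 trmx_mul hHt hHmht mulmxA -(mulmxA H Hmh Hmh) hHmh_sq.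
    by rewrite mulmxV // mul1mx.
  have := main_ineq hCt hCpos hCle _ (erefl u).
  rewrite hue hw => /(_ ltac:(lra)) hmain.
  rewrite /delta_x /delta_tilde -/H -/e -/HSS hgy qform_inv //.
  lra.
split; first exact: part1.
move=> dT T P Smat delta md m hmeas hdelta [[hmd1 hmd] _] hm1 hmmd.
set rho := md%:R / m%:R.
have hmpos : (0 : R) < m%:R by rewrite ltr0n.
have hmdpos : (0 : R) < md%:R by rewrite ltr0n.
have hrho1 : 1 <= rho by rewrite /rho ler_pdivlMr // mul1r ler_nat.
exists [set t | Event A Lam nu Hmh rho (Smat m t)]; split.
- exact: hmeas.
- apply: hmd; first by lra.
  have hm0 : m%:R != 0 :> R by rewrite gt_eqF.
  have hmd0 : md%:R != 0 :> R by rewrite gt_eqF.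
  have -> : md%:R / rho = m%:R by rewrite /rho; field; rewrite hm0 hmd0.
  exact: lexx.
- by move=> t ht x; rewrite mulrC; exact: part1.
Qed.
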